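(* Let $r\geq 3$ be an integer such that an affine plane of order $r$ exists, and let $\mathcal{H}_r=(V\setminus S,E)$ be the hypergraph defined below. Under the uniform weight assignment, the top-level of $\mathcal{H}_r$ is perturbable.
   Context: An affine plane of order $r$ is an $r$-uniform hypergraph on $r^2$ points with $r(r+1)$ lines such that every pair of distinct points lies in exactly one line; its lines partition into $r+1$ parallel classes $L_1,\dots,L_{r+1}$, each consisting of $r$ pairwise disjoint lines covering all points. Given an affine plane $\mathcal{G}_r=(V,\mathcal{L})$ of order $r$, label its points $v_{i,j}$, $i,j\in[r]$, so that $L_1=\{\{v_{i,1},\dots,v_{i,r}\}: i\in[r]\}$ (rows) and $L_{r+1}=\{\{v_{1,i},\dots,v_{r,i}\}: i\in[r]\}$ (columns). Let $S=\{v_{r,i}: i\in[r-1]\}\cup\{v_{r-1,r}\}$. The hypergraph $\mathcal{H}_r$ has vertex set $V\setminus S$ and edge set $E=\{e\setminus S: e\in\mathcal{L}\setminus L_{r+1}\}$ (i.e. delete the lines of $L_{r+1}$ and remove the vertices of $S$ from each remaining line). A weight assignment on a hypergraph with vertex set $W$ is a function $w:W\to\mathbb{R}_{\ge 0}$ with $\sum_{v\in W}w(v)=1$; the uniform weight assignment is $w(v)=1/|W|$; the weight of a set $T$ is $w(T)=\sum_{v\in T}w(v)$. The top-level of a hypergraph $H=(W,E)$ with respect to $w$ is the hypergraph $(W,E')$ where $E'$ is the set of edges of maximum weight. A perturbation on a hypergraph $H=(W,E)$ is a function $p:W\to\mathbb{R}$ with $\sum_{v\in W}p(v)=0$ and $\sum_{v\in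 e}p(v)<0$ for every $e\in E$; $H$ is perturbable if a perturbation exists. *)

(* Defs.v *)
From HB Require Import structures.
From mathcomp Require Import all_boot all_order all_algebra.
From mathcomp Require Import reals.
Set Implicit Arguments. Unset Strict Implicit. Unset Printing Implicit Defensive.
Import Order.TTheory GRing.Theory Num.Theory.
Local Open Scope ring_scope.

Section Hyper.
Variables (R : realType) (T : finType).

Definition wt (w : T -> R) (A : {set T}) : R := \sum_(v in A) w v.

Definition weight_assignment (W : {set T}) (w : T -> R) : Prop :=
  (forall v, v \in W -> 0 <= w v) /\ \sum_(v in W) w v = 1.

(* uniform weight assignment on W: w(v) = 1/|W| (only values on W matter) *)
Definition uniform_weight (W : {set T}) : T -> R := fun _ => (#|W|%:R)^-1.

Definition top_level (E : {set {set T}}) (w : T -> R) : {set {set T}} :=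
  [set e in E | [forall f in E, wt w f <= wt w e]].

Definition perturbation (W : {set T}) (E : {set {set T}}) (p : T -> R) : Prop :=
  \sum_(v in W) p v = 0 /\ (forall e, e \in E -> wt p e < 0).

Definition perturbable (W : {set T}) (E : {set {set T}}) : Prop :=
  exists p : T -> R, perturbation W E p.
End Hyper.

(* Points: 'I_r * 'I_r ; the pair (i,j) (0-indexed) is the paper's v_{i+1,j+1}. *)
Definition point r := ('I_r * 'I_r)%type.

(* L is the set of lines; P k (k : 'I_(r+1)) are the parallel classes
   L_1, ..., L_{r+1} (P ord0 = L_1, P ord_max = L_{r+1}). *)
Definition affine_plane (r : nat) (L : {set {set point r}})
    (P : 'I_r.+1 -> {set {set point r}}) : Prop :=
  [/\ forall e, e \in L -> #|e| = r,
      #|L| = (r * r.+1)%N,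
      (forall x y : point r, x != y -> #|[set e in L | (x \in e) && (y \in e)]| = 1%N),
      (forall e, (e \in L) = [exists k, e \in P k]) &
      (forall k k' : 'I_r.+1, k != k' -> [disjoint P k & P k']) /\
      (forall k, [/\ #|P k| = r,
                   forall e f, e \in P k -> f \in P k -> e != f -> [disjoint e & f] &
                   forall x : point r, exists e, (e \in P k) && (x \in e)])].

Definition rows r : {set {set point r}} :=
  [set [set v : point r | v.1 == i] | i : 'I_r].
Definition columns r : {set {set point r}} :=
  [set [set v : point r | v.2 == j] | j : 'I_r].

(* S = {v_{r,i} : i in [r-1]} ∪ {v_{r-1,r}} (0-indexed below) *)
Definition Sset r : {set point r} :=
  [set v : point r | ((v.1 == r.-1 :> nat) && (v.2 < r.-1)%N)
                     || ((v.1 == r.-2 :> nat) && (v.2 == r.-1 :> nat))].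

Definition H_vertices r : {set point r} := ~: Sset r.
Definition H_edges r (L : {set {set point r}}) (P : 'I_r.+1 -> {set {set point r}})
  : {set {set point r}} :=
  [set e :\: Sset r | e in L :\: P ord_max].

(* Main.v *)
Require Import Defs.
From HB Require Import structures.
From mathcomp Require Import all_boot all_order all_algebra.
From mathcomp Require Import reals zify.
Set Implicit Arguments. Unset Strict Implicit. Unset Printing Implicit Defensive.
Import Order.TTheory GRing.Theory Num.Theory.
Local Open Scope ring_scope.

Section S.
Variables (R : realType) (n : nat).
Let r := n.+3.
Definition g (i : nat) : R :=
  if i == n.+2 then - (n.+3)%:R else if i == n.+1 then (n.+3)%:R else -1.

Lemma sumg : \sum_(i < n.+3) g i = - (n.+1)%:R.
Proof.
rewrite big_ord_recr big_ord_recr /= /g !eqxx.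
rewrite (negbTE (_ : n.+1 != n.+2)) ?ltn_eqF //.
under eq_bigr => i _.
  rewrite (ltn_eqF (_ : (i < n.+2)%N)); last by apply: (ltn_trans (ltn_ord i)).
  rewrite (ltn_eqF (ltn_ord i)).
over.
by rewrite sumr_const card_ord addrK mulNrn.
Qed.
End S.
Lemma sumW (R : realType) n : \sum_(v in ~: Sset n.+3) g R n v.1 = 0.
Proof.
rewrite big_mkcond /=.
transitivity (\sum_(i < n.+3) \sum_(j < n.+3) if (i,j) \in ~: Sset n.+3 then g R n i else 0).
  by rewrite pair_bigA; apply: eq_bigr => -[i j].
rewrite big_ord_recr big_ord_recr /=.
have inS (a b : 'I_n.+3) : ((a, b) \in ~: Sset n.+3) =
   ~~ ((((a : nat) == n.+2) && (b < n.+2)%N) || (((a : nat) == n.+1) && ((b : nat) == n.+2))).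
  by rewrite !inE.
rewrite (eq_bigr (fun _ => (-1 : R) *+ n.+3)); last first.
  move=> i _; rewrite (eq_bigr (fun _ => -1)) ?sumr_const ?card_ord // => j _.
  have hi := ltn_ord i.
  have hi2 : (i < n.+2)%N := leqW hi.
  by rewrite inS /= (ltn_eqF hi2) (ltn_eqF hi) /g (ltn_eqF hi2) (ltn_eqF hi).
have h1 : \sum_(j < n.+3)
     (if (widen_ord (leqnSn n.+2) ord_max, j) \in ~: Sset n.+3
      then g R n n.+1 else 0) = (n.+3)%:R *+ n.+2.
  rewrite big_ord_recr /= inS /= !eqxx /= orbT /=.
  rewrite addr0 (eq_bigr (fun _ => (n.+3)%:R)) ?sumr_const ?card_ord // => j _.
  by rewrite inS /= (ltn_eqF (ltnSn _)) eqxx /= (ltn_eqF (ltn_ord j)) /g (ltn_eqF (ltnSn _)) eqxx.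
have h2 : \sum_(j < n.+3) (if (ord_max, j) \in ~: Sset n.+3 then g R n n.+2 else 0) = - (n.+3)%:R.
  rewrite big_ord_recr /= inS /= eqxx ltnn /= (gtn_eqF (ltnSn _)) /g eqxx.
  by rewrite big1 ?add0r // => j _; rewrite inS /= eqxx ltn_ord.
rewrite h1 h2 sumr_const card_ord -mulrnA mulNrn -mulrnA mulnS mulrnDr.
apply/eqP; rewrite subr_eq0 addrC subr_eq -!natrD eqr_nat; apply/eqP; lia.
Qed.

Theorem mainTheorem3 (R : realType) (r : nat)
    (L : {set {set point r}}) (P : 'I_r.+1 -> {set {set point r}}) :
  (3 <= r)%N ->
  affine_plane L P ->
  P ord0 = rows r ->
  P ord_max = columns r ->
  perturbable R (H_vertices r)
    (top_level (H_edges L P) (uniform_weight R (H_vertices r))).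
Proof.
case: r L P => [|[|[|n]]] L P // _ [hsz hcard hpair hL [hdisj hcls]] hP0 hPm.
exists (fun v : point n.+3 => g R n v.1).
split; first exact: sumW.
move=> e'; rewrite inE => /andP [He' /forallP Hmax].
move: He' Hmax => /imsetP [e]; rewrite inE => /andP [eNm eL] -> Hmax.
pose row (i : 'I_n.+3) := [set v : point n.+3 | v.1 == i].
have rowP0 i : row i \in P ord0 by rewrite hP0; apply: imset_f.
have rowL i : row i \in L by rewrite hL; apply/existsP; exists ord0.
have rowNm i : row i \notin P ord_max.
  by rewrite (disjointFr (hdisj ord0 ord_max _) (rowP0 i)).
have row0S : row ord0 :\: Sset n.+3 = row ord0.
  apply/setP => -[a b]; rewrite !inE /=.
  by case: (a =P ord0) => [->|]; rewrite ?andbF.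
have wtu A : wt (uniform_weight R (H_vertices n.+3)) A = (#|H_vertices n.+3|%:R)^-1 *+ #|A|.
  by rewrite /wt sumr_const.
have Wpos : 0 < (#|H_vertices n.+3|%:R : R)^-1.
  rewrite invr_gt0 ltr0n card_gt0; apply/set0Pn; exists (ord0, ord0).
  by rewrite !inE.
have hcardE : #|e :\: Sset n.+3| = n.+3.
  have := subset_leq_card (subsetDl e (Sset n.+3)); rewrite (hsz _ eL) => h1.
  apply/eqP; rewrite eqn_leq h1 /=.
  have := implyP (Hmax (row ord0 :\: Sset n.+3)).
  have hr : row ord0 :\: Sset n.+3 \in H_edges L P.
    by apply: imset_f; rewrite inE rowNm rowL.
  move=> /(_ hr).
  by rewrite !wtu ler_pMn2l // row0S hsz.
have eS : e :\: Sset n.+3 = e.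
  by apply/eqP; rewrite eqEcard subsetDl hcardE (hsz _ eL) /= leqnn.
have eNS x : x \in e -> x \notin Sset n.+3.
  by rewrite -{1}eS inE => /andP [].
rewrite eS /wt.
case: (boolP (e \in P ord0)) => e0.
  move: e0; rewrite hP0 => /imsetP [i _ ei]; subst e.
  have hi2 : (i : nat) != n.+2.
    have := eNS (i, ord0); rewrite inE eqxx => /(_ isT).
    by apply: contraNneq => hi; rewrite !inE /= hi eqxx.
  have hi1 : (i : nat) != n.+1.
    have := eNS (i, ord_max); rewrite inE eqxx => /(_ isT).
    by apply: contraNneq => hi; rewrite !inE /= hi !eqxx orbT.
  rewrite (eq_bigr (fun _ => -1)) ?sumr_const.
    by rewrite (hsz _ eL) mulNrn oppr_lt0 ltr0n.
  by move=> x; rewrite inE => /eqP ->; rewrite /g (negbTE hi2) (negbTE hi1).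
have inj : {in e &, injective (fun v : point n.+3 => v.1)}.
  move=> x y hx hy hxy; apply/eqP; apply: contraT => nxy.
  have := hpair _ _ nxy => /eqP /cards1P [a ha].
  have ea : e \in [set a] by rewrite -ha inE eL hx hy.
  have ra : row x.1 \in [set a] by rewrite -ha inE rowL !inE eqxx hxy /= eqxx.
  move: ea ra; rewrite !inE => /eqP ea /eqP ra.
  by move: e0; rewrite ea -ra rowP0.
have imT : [set v.1 | v in e] = [set: 'I_n.+3].
  apply/eqP; rewrite eqEcard subsetT cardsT card_ord card_in_imset // (hsz _ eL) leqnn.
  done.
rewrite -(big_imset (fun i : 'I_n.+3 => g R n i) inj) /= imT.
rewrite (eq_bigl (fun _ => true)); last by move=> i; rewrite inE.
by rewrite sumg oppr_lt0 ltr0n.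
Qed.
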